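(* Let $\alpha>0$, $\sigma>0$, $X_\natural(s,t) = \mathbf{1}\{|s|\le\alpha,|t|\le\alpha\}$, and $$\mathcal{C}(\mathbf{x}) = \Big\langle\nabla_{\mathbf{x}}[\varphi^{(2)}_{\sigma^2}\ast X_\natural](\mathbf{x}),\ \begin{bmatrix}0&-1\\1&0\end{bmatrix}\mathbf{x}\Big\rangle_{\ell^2},\qquad\mathbf{x}\in\mathbb{R}^2.$$ Let $\mathbf{Q}$ be one of the matrices $\begin{bmatrix}1&0\\0&-1\end{bmatrix},\begin{bmatrix}-1&0\\0&1\end{bmatrix},\begin{bmatrix}0&1\\1&0\end{bmatrix},\begin{bmatrix}0&-1\\-1&0\end{bmatrix}$ (the symmetries of the square of determinant $-1$). Then $\mathcal{C}(\mathbf{Q}\mathbf{x}) = -\mathcal{C}(\mathbf{x})$ for all $\mathbf{x}\in\mathbb{R}^2$.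
   Context: $\varphi^{(2)}_{\sigma^2}(\mathbf{x}) = (2\pi\sigma^2)^{-1}e^{-\|\mathbf{x}\|_2^2/(2\sigma^2)}$ and $\ast$ is convolution on $\mathbb{R}^2$. *)

(* Defs.v *)
From HB Require Import structures.
From mathcomp Require Import all_boot all_order all_algebra.
From mathcomp Require Import all_classical all_reals all_analysis.
Set Implicit Arguments. Unset Strict Implicit. Unset Printing Implicit Defensive.
Import Order.TTheory GRing.Theory Num.Theory.
Local Open Scope ring_scope.
Local Open Scope classical_set_scope.

Section Defs.
Variable R : realType.

Definition leb2 : set (R * R) -> \bar R :=
  ((@lebesgue_measure R) \x (@lebesgue_measure R))%E.

Definition mx2 (a b c d : R) : 'M[R]_2 :=
  \matrix_(i < 2, j < 2)
    if i == 0 then (if j == 0 then a else b) else (if j == 0 then c else d).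

Definition mxapp (Q : 'M[R]_2) (x : R * R) : R * R :=
  (Q 0 0 * x.1 + Q 0 1 * x.2, Q 1 0 * x.1 + Q 1 1 * x.2).

Definition dot2 (x y : R * R) : R := x.1 * y.1 + x.2 * y.2.

Definition gauss2 (s2 : R) (x : R * R) : R :=
  (2 * pi * s2)^-1 * expR (- (x.1 ^+ 2 + x.2 ^+ 2) / (2 * s2)).

Definition conv2 (f g : R * R -> R) (x : R * R) : R :=
  Rintegral leb2 setT (fun y => f (x.1 - y.1, x.2 - y.2) * g y).

Definition Xsq (alpha : R) (x : R * R) : R :=
  if (`|x.1| <= alpha) && (`|x.2| <= alpha) then 1 else 0.

Definition grad2 (F : R * R -> R) (x : R * R) : R * R :=
  ((fun s => F (s, x.2))^`() x.1, (fun t => F (x.1, t))^`() x.2).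

Definition Cfun (alpha sigma : R) (x : R * R) : R :=
  dot2 (grad2 (conv2 (gauss2 (sigma ^+ 2)) (Xsq alpha)) x)
       (mxapp (mx2 0 (-1) 1 0) x).

End Defs.

(* Main.v *)
Require Import Defs.
From HB Require Import structures.
From mathcomp Require Import all_boot all_order all_algebra.
From mathcomp Require Import all_classical all_reals all_analysis measurable_realfun.
From mathcomp Require Import ring.
Import Order.TTheory GRing.Theory Num.Theory.
Local Open Scope ring_scope.
Local Open Scope classical_set_scope.

Section H.
Variable R : realType.
Local Notation mu := (@lebesgue_measure R).

Lemma dN (P : set R) : (\forall h \near 0^', P h) -> \forall h \near 0^', P (- h).
Proof.
move=> [e e0 H]; exists e => // y /= ye y0; apply: H.
  by move: ye; rewrite /= !sub0r !normrN.
by rewrite oppr_eq0.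
Qed.

Lemma derive1_refl (f : R -> R) t :
  derive1 (fun u => f (- u)) t = - derive1 f (- t).
Proof.
rewrite /derive1.
set q := fun h : R => h^-1 *: (f (h + - t) - f (- t)).
have -> : (fun h : R => h^-1 *: (f (- (h + t)) - f (- t))) = (fun h => - q (- h)).
  by apply/funext => h; rewrite /q invrN scaleNr opprK opprD.
have -> : ((fun h => - q (- h)) @ 0^') = ((- q) @ 0^').
  apply/seteqP; split => A /=.
    by move=> /dN; apply: filterS => h /=; rewrite opprK.
  by move=> /dN.
have [cq|ncq] := pselect (cvg (q @ 0^')).
  by rewrite limN.
have ncq' : ~ cvg ((- q) @ 0^') by rewrite is_cvgNE.
rewrite /lim /lim_in !xgetPN.
- by rewrite /= oppr0.
- by move=> l ql; apply: ncq; apply/cvg_ex; exists l.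
- by move=> l ql; apply: ncq'; apply/cvg_ex; exists l.
Qed.

Let M := measurableTypeR R.
Let T2 := (M * M)%type.

Lemma mxappE (a b c d : R) (x : R * R) :
  mxapp (mx2 a b c d) x = (a * x.1 + b * x.2, c * x.1 + d * x.2).
Proof. by rewrite /mxapp /mx2 !mxE. Qed.

Lemma gaussN2 s (z : R * R) : gauss2 s (z.1, - z.2) = gauss2 s z.
Proof. by rewrite /gauss2 /= sqrrN. Qed.
Lemma gaussN1 s (z : R * R) : gauss2 s (- z.1, z.2) = gauss2 s z.
Proof. by rewrite /gauss2 /= sqrrN. Qed.
Lemma gaussS s (z : R * R) : gauss2 s (z.2, z.1) = gauss2 s z.
Proof. by rewrite /gauss2 /= addrC. Qed.
Lemma XN2 a (z : R * R) : Xsq a (z.1, - z.2) = Xsq a z.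
Proof. by rewrite /Xsq /= normrN. Qed.
Lemma XN1 a (z : R * R) : Xsq a (- z.1, z.2) = Xsq a z.
Proof. by rewrite /Xsq /= normrN. Qed.
Lemma XS a (z : R * R) : Xsq a (z.2, z.1) = Xsq a z.
Proof. by rewrite /Xsq /= andbC. Qed.

Lemma gauss_ge0 (s : R) (z : R * R) : 0 < s -> 0 <= gauss2 s z.
Proof.
move=> s0; rewrite /gauss2; apply: mulr_ge0; last exact: expR_ge0.
rewrite invr_ge0; apply: mulr_ge0; last exact: ltW.
by apply: mulr_ge0 => //; exact: pi_ge0.
Qed.
Lemma X_ge0 (a : R) (z : R * R) : 0 <= Xsq a z.
Proof. by rewrite /Xsq; case: ifP. Qed.

Lemma mint (s a : R) (x : R * R) :
  measurable_fun [set: T2] (fun y : T2 => ((gauss2 s (x.1 - y.1, x.2 - y.2) * Xsq a y)%:E)).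
Proof.
have m1 : measurable_fun [set: T2] (fun y : T2 => (x.1 - y.1)%R).
  by apply: measurable_funB => //; exact: measurable_fst.
have m2 : measurable_fun [set: T2] (fun y : T2 => (x.2 - y.2)%R).
  by apply: measurable_funB => //; exact: measurable_snd.
have m3 := measurable_funD (measurable_funX 2 m1) (measurable_funX 2 m2).
have m4 := measurable_funM (measurable_funN m3) (measurable_cst (2 * s)^-1).
have m5 := measurableT_comp (@measurable_expR R) m4.
have m6 := measurable_funM (measurable_cst (2 * pi * s)^-1) m5.
apply/measurable_EFinP; apply: measurable_funM.
  exact: m6.
rewrite /Xsq; apply: measurable_fun_ifT => //.
apply: measurable_and; apply: measurable_fun_ler => //.
  apply: measurableT_comp => //; exact: measurable_fst.
apply: measurableT_comp => //; exact: measurable_snd.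
Qed.

Local Open Scope ereal_scope.
Lemma refl1 (f : M -> \bar R) : measurable_fun setT f -> (forall r, 0 <= f r) ->
  \int[mu]_r f (- r)%R = \int[mu]_r f r.
Proof.
move=> mf f0.
have mo : measurable_fun setT (-%R : M -> M).
  by apply: measurable_funN.
apply/esym.
rewrite (_ : (fun r => f (- r)%R) = f \o (-%R)) // -[in RHS](@preimage_setT _ _ (-%R : M -> M)).
rewrite -ge0_integral_pushforward//=.
apply: eq_measure_integral => //= A mA AS; exact/esym/lebesgue_measureN.
Qed.


Lemma swap2 (f : T2 -> \bar R) : measurable_fun setT f -> (forall r, 0 <= f r) ->
  @integral _ T2 R (leb2 (R:=R)) setT (fun y =>  f (y.2, y.1)) = @integral _ T2 R (leb2 (R:=R)) setT (fun y => f y).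
Proof.
move=> mf f0.
have mfs : measurable_fun setT (fun y : T2 => f (y.2, y.1)).
  apply: measurableT_comp => //; apply: measurable_fun_pair.
  exact: measurable_snd. exact: measurable_fst.
rewrite /leb2 (fubini_tonelli1 _ mfs) //= (fubini_tonelli2 _ mf) //.
Qed.

Lemma refl2 (f : T2 -> \bar R) : measurable_fun setT f -> (forall r, 0 <= f r) ->
  @integral _ T2 R (leb2 (R:=R)) setT (fun y =>  f (y.1, - y.2)%R) = @integral _ T2 R (leb2 (R:=R)) setT (fun y => f y).
Proof.
move=> mf f0.
have mfs : measurable_fun setT (fun y : T2 => f (y.1, - y.2)%R).
  apply: measurableT_comp => //; apply: measurable_fun_pair.
  exact: measurable_fst. apply: measurable_funN; exact: measurable_snd.
rewrite /leb2 (fubini_tonelli1 _ mfs) //= (fubini_tonelli1 _ mf) //.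
apply: eq_integral => x _; rewrite /fubini_F.
apply: (@refl1 (fun y => f (x, y))) => //.
exact: measurable_fun_pair2.
Qed.

Lemma refl1' (f : T2 -> \bar R) : measurable_fun setT f -> (forall r, 0 <= f r) ->
  @integral _ T2 R (leb2 (R:=R)) setT (fun y =>  f (- y.1, y.2)%R) = @integral _ T2 R (leb2 (R:=R)) setT (fun y => f y).
Proof.
move=> mf f0.
have mfs : measurable_fun setT (fun y : T2 => f (- y.1, y.2)%R).
  apply: measurableT_comp => //; apply: measurable_fun_pair.
  apply: measurable_funN; exact: measurable_fst. exact: measurable_snd.
rewrite /leb2 (fubini_tonelli2 _ mfs) //= (fubini_tonelli2 _ mf) //.
apply: eq_integral => x _; rewrite /fubini_G.
apply: (@refl1 (fun y => f (y, x))) => //.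
exact: measurable_fun_pair1.
Qed.
End H.

Section M.
Variable R : realType.
Let M := measurableTypeR R.
Let T2 := (M * M)%type.

Lemma f0 (s a : R) (x : R * R) : 0 < s ->
  forall y : T2, (0 <= ((gauss2 s (x.1 - y.1, x.2 - y.2) * Xsq a y)%:E))%E.
Proof. by move=> s0 y; rewrite lee_fin mulr_ge0 // ?gauss_ge0 // X_ge0. Qed.

Lemma FN2 (s a : R) (x : R * R) : 0 < s ->
  conv2 (gauss2 s) (Xsq a) (x.1, - x.2) = conv2 (gauss2 s) (Xsq a) x.
Proof.
move=> s0; rewrite /conv2 /Rintegral.
rewrite -(@refl2 R _ (@mint R s a x) (f0 s a x s0)).
congr fine; apply: eq_integral => y _ /=.
rewrite [in RHS]XN2 -(@gaussN2 R s (x.1 - y.1, - x.2 - y.2)) /=.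
by rewrite opprD !opprK.
Qed.

Lemma FN1 (s a : R) (x : R * R) : 0 < s ->
  conv2 (gauss2 s) (Xsq a) (- x.1, x.2) = conv2 (gauss2 s) (Xsq a) x.
Proof.
move=> s0; rewrite /conv2 /Rintegral.
rewrite -(@refl1' R _ (@mint R s a x) (f0 s a x s0)).
congr fine; apply: eq_integral => y _ /=.
rewrite [in RHS]XN1 -(@gaussN1 R s (- x.1 - y.1, x.2 - y.2)) /=.
by rewrite opprD !opprK.
Qed.

Lemma FS (s a : R) (x : R * R) : 0 < s ->
  conv2 (gauss2 s) (Xsq a) (x.2, x.1) = conv2 (gauss2 s) (Xsq a) x.
Proof.
move=> s0; rewrite /conv2 /Rintegral.
rewrite -(@swap2 R _ (@mint R s a x) (f0 s a x s0)).
congr fine; apply: eq_integral => y _ /=.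
rewrite [in RHS]XS -(@gaussS R s (x.2 - y.1, x.1 - y.2)) /=.
by [].
Qed.
End M.

Theorem mainTheorem9 (R : realType) (alpha sigma : R) (Q : 'M[R]_2) :
  0 < alpha -> 0 < sigma ->
  (Q = mx2 1 0 0 (-1) \/ Q = mx2 (-1) 0 0 1 \/
   Q = mx2 0 1 1 0 \/ Q = mx2 0 (-1) (-1) 0) ->
  forall x : R * R, Cfun alpha sigma (mxapp Q x) = - Cfun alpha sigma x.
Proof.
move=> a0 s0 hQ x.
have s20 : 0 < sigma ^+ 2 by rewrite exprn_gt0.
rewrite /Cfun /dot2 /grad2.
set F := conv2 (gauss2 (sigma ^+ 2)) (Xsq alpha).
have F2 : forall u v, F (u, - v) = F (u, v).
  by move=> u v; exact: (@FN2 R _ alpha (u, v) s20).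
have F1 : forall u v, F (- u, v) = F (u, v).
  by move=> u v; exact: (@FN1 R _ alpha (u, v) s20).
have FSw : forall u v, F (v, u) = F (u, v).
  by move=> u v; exact: (@FS R _ alpha (u, v) s20).
clearbody F.
have D2N : forall u v, derive1 (fun t => F (u, t)) (- v) = - derive1 (fun t => F (u, t)) v.
  move=> u v; have /= := @derive1_refl R (fun t => F (u, t)) v.
  rewrite (_ : (fun t => F (u, - t)) = (fun t => F (u, t))).
    by move=> ->; rewrite opprK.
  by apply/funext => t; exact: F2.
have D1N : forall u v, derive1 (fun t => F (t, v)) (- u) = - derive1 (fun t => F (t, v)) u.
  move=> u v; have /= := @derive1_refl R (fun t => F (t, v)) u.
  rewrite (_ : (fun t => F (- t, v)) = (fun t => F (t, v))).
    by move=> ->; rewrite opprK.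
  by apply/funext => t; exact: F1.
rewrite !(@mxappE R) /=.
case: hQ => [->|[->|[->|->]]]; rewrite /mx2 !mxE /= !mul0r !mul1r !addr0 !add0r !mulN1r ?opprK.
- rewrite (_ : (fun s => F (s, - x.2)) = (fun s => F (s, x.2))); last first.
    by apply/funext => s; exact: F2.
  rewrite D2N; ring.
- rewrite D1N (_ : (fun t => F (- x.1, t)) = (fun t => F (x.1, t))); last first.
    by apply/funext => t; exact: F1.
  ring.
- rewrite (_ : (fun s => F (s, x.1)) = (fun s => F (x.1, s))); last first.
    by apply/funext => s; exact: FSw.
  rewrite (_ : (fun t => F (x.2, t)) = (fun t => F (t, x.2))); last first.
    by apply/funext => t; exact: FSw.
  ring.
- rewrite (_ : (fun s => F (s, - x.1)) = (fun s => F (x.1, s))); last first.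
    by apply/funext => s; rewrite F2; exact: FSw.
  rewrite (_ : (fun t => F (- x.2, t)) = (fun t => F (t, x.2))); last first.
    by apply/funext => t; rewrite F1; exact: FSw.
  rewrite D1N D2N; ring.
Qed.
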